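(* Let $t_*<t^*$ and $T=[t_*,t^*]$. Suppose $q$ is non-decreasing and $p$ is continuous and strictly increasing on some open interval containing $T$, and let $p^{-1}$ denote the inverse of $p$. Suppose that for some $j_0$ the sequence defined by $t_1=t_*$ and $t_{j+1}=p^{-1}(q(t_j))$, $j=1,\dots,j_0-1$, is well defined, strictly increasing, and satisfies $t_{j_0}>t^*>t_{j_0-1}$. Then $q(t)>p(t)$ for all $t\in T$. *)

(* Defs.v *)
(* concrete reals R, with Coquelicot's extended reals Rbar
   for the endpoints of a possibly unbounded open interval. *)
From Stdlib Require Import Reals.
From Coquelicot Require Import Coquelicot.
Open Scope R_scope.

Definition in_open_itv (a b : Rbar) (x : R) : Prop :=
  Rbar_lt a x /\ Rbar_lt x b.

(* Main.v *)
Require Import Defs.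
From Stdlib Require Import Reals Lia Lra.
From Coquelicot Require Import Coquelicot.
Open Scope R_scope.

Theorem lemma2p1
  (tlo thi : R) (p q : R -> R) (a b : Rbar) (t : nat -> R) (j0 : nat) :
  tlo < thi ->
  (* (a, b) is an open interval containing T = [tlo, thi] *)
  Rbar_lt a tlo -> Rbar_lt thi b ->
  (* q non-decreasing on (a, b) *)
  (forall x y, in_open_itv a b x -> in_open_itv a b y -> x <= y -> q x <= q y) ->
  (* p continuous and strictly increasing on (a, b) *)
  (forall x, in_open_itv a b x -> continuity_pt p x) ->
  (forall x y, in_open_itv a b x -> in_open_itv a b y -> x < y -> p x < p y) ->
  (* the sequence t_1 = tlo, t_{j+1} = p^{-1}(q(t_j)), j = 1..j0-1,
     is well defined: t_{j+1} is the point of (a, b) mapped by p to q(t_j) *)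
  (2 <= j0)%nat ->
  t 1%nat = tlo ->
  (forall j, (1 <= j)%nat -> (j < j0)%nat ->
     in_open_itv a b (t (S j)) /\ p (t (S j)) = q (t j)) ->
  (* strictly increasing *)
  (forall i j, (1 <= i)%nat -> (i < j)%nat -> (j <= j0)%nat -> t i < t j) ->
  t j0 > thi -> thi > t (pred j0) ->
  forall x, tlo <= x <= thi -> q x > p x.
Proof.
intros Hlt Ha Hb Hq Hpc Hp Hj0 Ht1 Hstep Hinc Htj0 Htpj0 x Hx.
assert (Hex : forall n k, (j0 - k = n)%nat -> (1 <= k <= j0)%nat -> t k <= x ->
   exists j, (1 <= j)%nat /\ (j < j0)%nat /\ t j <= x /\ x < t (S j)).
{ induction n as [|n IH]; intros k Hk Hk1 Htk.
  - assert (k = j0) by lia. subst k. lra.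
  - destruct (Rlt_le_dec x (t (S k))) as [H|H].
    + exists k. repeat split; try lia; auto.
    + apply (IH (S k)); try lia; auto. }
destruct (Hex (j0 - 1)%nat 1%nat) as [j [Hj1 [Hj2 [Hj3 Hj4]]]]; try lia.
{ rewrite Ht1; lra. }
assert (Hxin : in_open_itv a b x).
{ split.
  - destruct a as [a| |]; simpl in *; auto; lra.
  - destruct b as [b| |]; simpl in *; auto; lra. }
assert (Htjin : in_open_itv a b (t j)).
{ destruct (Nat.eq_dec j 1) as [E|E].
  - subst j. rewrite Ht1. split.
    + exact Ha.
    + destruct b as [b| |]; simpl in *; auto; lra.
  - destruct j as [|j']; [lia|]. apply (Hstep j'); lia. }
destruct (Hstep j Hj1 Hj2) as [Hin Heq].
assert (H1 := Hq _ _ Htjin Hxin Hj3).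
assert (H2 := Hp _ _ Hxin Hin Hj4).
lra.
Qed.
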